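(* Let $n\in\mathbb{N}$ with $n\geq 2$, and let $x,y$ be two distinct symbols not in $\{1,\dots,n\}$. Regard $S_n$ as the subgroup of $S_{n+2}=\mathrm{Sym}(\{1,\dots,n,x,y\})$ consisting of the permutations fixing $x$ and $y$. Then for every $\sigma\in S_n$, the permutation $\sigma^{-1}$ (as an element of $S_{n+2}$) can be written as a product of pairwise distinct transpositions, each of which lies in $S_{n+2}\setminus S_n$ (that is, each transposition moves at least one of $x$, $y$).
   Context: Permutations are composed as functions. $S_{n+2}\setminus S_n$ denotes the set of permutations of $\{1,\dots,n,x,y\}$ that do not fix both $x$ and $y$. *)

(* Defs.v *)
From mathcomp Require Import all_boot all_fingroup.
Set Implicit Arguments. Unset Strict Implicit. Unset Printing Implicit Defensive.
Local Open Scope group_scope.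

(* The ground set {1,...,n,x,y} is modelled by 'I_n.+2:
   the values 0..n-1 stand for 1..n, the value n stands for x,
   and the value n+1 stands for y. *)
Definition ptx (n : nat) : 'I_n.+2 := inord n.
Definition pty (n : nat) : 'I_n.+2 := ord_max.

Definition is_transposition (T : finType) (t : {perm T}) : Prop :=
  exists a b : T, a != b /\ t = tperm a b.

(* Composition as functions: compose_fun [:: t1; ...; tk] = t1 o t2 o ... o tk.
   (In MathComp, (s * t) x = t (s x), so this is tk * ... * t1.) *)
Definition compose_fun (T : finType) (l : seq {perm T}) : {perm T} :=
  \prod_(t <- rev l) t.

(* Main.v *)
Require Import Defs.
From mathcomp Require Import all_boot all_fingroup.
From mathcomp Require Import zify.
Local Open Scope group_scope.

Ltac tpc := repeat (rewrite ?eqxx /=; match goal with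
  | H : is_true (?u != ?v) |- context [?u == ?v] => rewrite (negbTE H)
  | H : is_true (?v != ?u) |- context [?u == ?v] => rewrite (eq_sym u v) (negbTE H)
  | |- context [?u == ?v] => is_var u; is_var v;
        let Hn := fresh "Hn" in destruct (eqVneq u v) as [->|Hn]
  end); rewrite ?eqxx /=; try done.
Ltac tpid := let i := fresh "i" in
  apply/permP => i; rewrite !permM !permE /=; tpc.

Lemma id1 (T : finType) (x y a : T) : x != y -> x != a -> y != a ->
  tperm y a * tperm x y * tperm x a = tperm x y.
Proof. move=> h1 h2 h3; tpid. Qed.
Lemma id2 (T : finType) (z c d : T) : z != c -> z != d -> c != d ->
  tperm z c * tperm z d = tperm z d * tperm c d.
Proof. move=> h1 h2 h3; tpid. Qed.
Lemma id3 (T : finType) (x y c d : T) : x != y -> x != c -> x != d -> y != c -> y != d -> c != d ->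
  tperm x y * tperm y c * tperm x d * tperm y d * tperm x c = tperm c d.
Proof. move=> h1 h2 h3 h4 h5 h6; tpid. Qed.

Lemma cf_cat (T : finType) (a b : seq {perm T}) :
  compose_fun (a ++ b) = compose_fun b * compose_fun a.
Proof. by rewrite /compose_fun rev_cat big_cat. Qed.

Lemma cf_cons (T : finType) (t : {perm T}) (l : seq {perm T}) :
  compose_fun (t :: l) = compose_fun l * t.
Proof. by rewrite -cat1s cf_cat /compose_fun /= big_cons big_nil mulg1. Qed.

Lemma cf_fix (T : finType) (l : seq {perm T}) (c : T) :
  (forall t, t \in l -> t c = c) -> compose_fun l c = c.
Proof.
elim: l => [|t l IH] H; first by rewrite /compose_fun big_nil perm1.
rewrite cf_cons permM IH; first by apply: H; rewrite inE eqxx.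
by move=> u hu; apply: H; rewrite inE hu orbT.
Qed.

Lemma comm_tp (T : finType) (s : {perm T}) (c d : T) :
  s c = c -> s d = d -> s * tperm c d = tperm c d * s.
Proof.
move=> hc hd; apply/permP => i; rewrite !permM.
case: (tpermP c d i) => [->|->|ic id]; first by rewrite hc tpermL.
  by rewrite hd tpermR.
rewrite tpermD //; apply/eqP => E.
  by apply: ic; apply: (perm_inj (s := s)); rewrite hc.
by apply: id; apply: (perm_inj (s := s)); rewrite hd.
Qed.

Lemma split_has (T : Type) (p : pred T) (l : seq T) : has p l ->
  exists l1 e l2, l = l1 ++ e :: l2 /\ p e /\ ~~ has p l1.
Proof.
move=> h; have [x0 _] : exists x : T, True by case: l h => [//|x0 ? ?]; exists x0.
exists (take (find p l) l), (nth x0 l (find p l)),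
  (drop (find p l).+1 l).
have hs : find p l < size l by rewrite -has_find.
split; first by rewrite -drop_nth // cat_take_drop.
split; first by apply: nth_find.
by rewrite has_take // ltnn.
Qed.

Lemma uniq_ins (T : eqType) (s1 s2 : seq T) (f : T) :
  uniq (s1 ++ s2) -> f \notin s1 ++ s2 -> uniq (s1 ++ f :: s2).
Proof.
move=> u nf.
have Pe : perm_eq (s1 ++ [:: f] ++ s2) ([:: f] ++ s1 ++ s2)
  by rewrite (perm_catCA s1 [:: f] s2) perm_refl.
rewrite -cat1s (perm_uniq Pe) /=.
by rewrite nf u.
Qed.

Section Main.
Variable n : nat.
Notation X := (ptx n).
Notation Y := (pty n).
Notation T := ('I_n.+2).

Lemma valX : nat_of_ord X = n.
Proof. by rewrite /ptx inordK. Qed.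
Lemma valY : nat_of_ord Y = n.+1.
Proof. by []. Qed.

Lemma XY : X != Y.
Proof. by apply/eqP => /(congr1 (@nat_of_ord _)); rewrite valX valY; lia. Qed.

Lemma small_X (c : T) : nat_of_ord c < n -> c != X.
Proof. by move=> h; apply/eqP => /(congr1 (@nat_of_ord _)); rewrite valX; lia. Qed.
Lemma small_Y (c : T) : nat_of_ord c < n -> c != Y.
Proof. by move=> h; apply/eqP => /(congr1 (@nat_of_ord _)); rewrite valY; lia. Qed.

Lemma ord_cases (i : T) : nat_of_ord i < n \/ i = X \/ i = Y.
Proof.
case: (ltnP i n) => h; first by left.
right; have := ltn_ord i => h2.
case: (eqVneq (nat_of_ord i) n) => e.
  by left; apply: val_inj; rewrite /= valX.
by right; apply: val_inj; rewrite /=; lia.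
Qed.

Definition Inv (P : T -> Prop) (t : {perm T}) :=
  exists z a : T, (z = X \/ z = Y) /\ a != z /\ (P a \/ a = X \/ a = Y)
     /\ t = tperm z a.

Lemma Inv_mono (P Q : T -> Prop) t : (forall b, P b -> Q b) -> Inv P t -> Inv Q t.
Proof.
move=> hPQ [z [a [hz [ha [hP ->]]]]]; exists z, a; do 3!split => //.
by case: hP => [/hPQ|]; [left|right].
Qed.

Lemma Inv_fix (P : T -> Prop) t c : ~ P c -> nat_of_ord c < n -> Inv P t -> t c = c.
Proof.
move=> nP hc [z [a [hz [ha [hP ->]]]]]; apply: tpermD.
  by case: hz => ->; rewrite eq_sym ?small_X ?small_Y.
apply/eqP => E; subst a; case: hP => [//|[] E]; move: hc; rewrite E.
  by rewrite valX ltnn.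
by rewrite valY; lia.
Qed.

Lemma insert_fix (P : T -> Prop) (a : T) (l : seq {perm T}) :
  ~ P a -> nat_of_ord a < n -> (forall t, t \in l -> Inv P t) -> uniq l ->
  tperm X Y \in l ->
  exists l', uniq l' /\ (forall t, t \in l' -> Inv (fun b => P b \/ b = a) t)
    /\ (forall t, t \in l -> t \in l') /\ (exists2 t, t \in l' & t a != a)
    /\ compose_fun l' = compose_fun l.
Proof.
move=> nP ha hI hu hxy.
have hh : has (pred1 (tperm X Y)) l by rewrite has_pred1.
have [l1 [e [l2 [El [/eqP He _]]]]] := @split_has _ (pred1 (tperm X Y)) l hh.
have fixa : forall t, t \in l -> t a = a by move=> t /hI; apply: Inv_fix.
have Xa : X != a by rewrite eq_sym small_X.
have Ya : Y != a by rewrite eq_sym small_Y.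
have nl : forall t : {perm T}, t a != a -> t \notin l.
  by move=> t h; apply/negP => /fixa; apply/eqP.
have xan : tperm X a a != a by rewrite tpermR.
have yan : tperm Y a a != a by rewrite tpermR.
have xy_ne : tperm X a != tperm Y a.
  have YX : Y != X by rewrite eq_sym XY.
  have aX : a != X by rewrite eq_sym.
  apply/eqP => /permP/(_ X); rewrite tpermL tpermD //.
  by move=> E; move: Xa; rewrite E eqxx.
exists (l1 ++ tperm X a :: e :: tperm Y a :: l2); split.
  apply: uniq_ins.
    have -> : l1 ++ e :: tperm Y a :: l2 = (l1 ++ [:: e]) ++ tperm Y a :: l2
      by rewrite -catA.
    apply: uniq_ins; first by rewrite -catA -El.
    by rewrite -catA -El; apply: nl.
  rewrite mem_cat !inE negb_or; apply/andP; split.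
    by apply/negP => h; move: (nl _ xan); rewrite El mem_cat h.
  apply/negP => /orP [/eqP E|/orP [/eqP E|h]].
  - by move: (nl _ xan); rewrite El E mem_cat inE eqxx orbT.
  - by move: xy_ne; rewrite E eqxx.
  - by move: (nl _ xan); rewrite El mem_cat inE h !orbT.
split.
  move=> t; rewrite mem_cat !inE => /orP [h|/orP [/eqP ->|/orP [/eqP ->|/orP [/eqP ->|h]]]].
  - by apply: (@Inv_mono P) => [b|]; [left|apply: hI; rewrite El mem_cat h].
  - exists X, a; split; first by left.
    by split; [rewrite eq_sym|split; [left; right|]].
  - by apply: (@Inv_mono P) => [b|]; [left|apply: hI; rewrite El mem_cat inE eqxx orbT].
  - exists Y, a; split; first by right.
    by split; [rewrite eq_sym|split; [left; right|]].
  - by apply: (@Inv_mono P) => [b|]; [left|apply: hI; rewrite El mem_cat inE h !orbT].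
split.
  move=> t; rewrite El !mem_cat !inE => /orP [->//|/orP [->|->]]; by rewrite !orbT.
split; first by exists (tperm X a) => //; rewrite mem_cat inE eqxx orbT.
rewrite El !cf_cat !cf_cons He -!mulgA; congr (_ * _).
by rewrite !mulgA id1 // XY.
Qed.

Lemma insert_move (P : T -> Prop) (c d : T) (l : seq {perm T}) :
  ~ P c -> nat_of_ord c < n -> d != X -> d != Y ->
  (forall t, t \in l -> Inv P t) -> uniq l ->
  has (fun t : {perm T} => t d != d) l ->
  exists l', uniq l' /\ (forall t, t \in l' -> Inv (fun b => P b \/ b = c) t)
    /\ (forall t, t \in l -> t \in l') /\ (exists2 t, t \in l' & t c != c)
    /\ compose_fun l' = compose_fun l * tperm c d.
Proof.
move=> nP hc dX dY hI hu hd.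
have [l1 [e [l2 [El [Hed Hn]]]]] := @split_has _ (fun t : {perm T} => t d != d) l hd.
have fixc : forall t, t \in l -> t c = c by move=> t /hI; apply: Inv_fix.
have nl : forall t : {perm T}, t c != c -> t \notin l.
  by move=> t h; apply/negP => /fixc; apply/eqP.
have eIn : e \in l by rewrite El mem_cat inE eqxx orbT.
have cd : c != d.
  by apply/eqP => E; move: Hed; rewrite -E fixc // eqxx.
have [z [a [hz [haz [hPa Ee]]]]] := hI e eIn.
have zc : z != c by case: hz => ->; rewrite eq_sym ?small_X ?small_Y.
have zd : z != d by case: hz => ->; rewrite eq_sym.
have ad : a = d.
  apply/eqP; apply/negPn/negP => ad; move: Hed; rewrite Ee tpermD //.
  by rewrite eqxx.
subst a.
have zcn : tperm z c c != c by rewrite tpermR.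
exists (l1 ++ e :: tperm z c :: l2); split.
  have -> : l1 ++ e :: tperm z c :: l2 = (l1 ++ [:: e]) ++ tperm z c :: l2
    by rewrite -catA.
  apply: uniq_ins; first by rewrite -catA -El.
  by rewrite -catA -El; apply: nl.
split.
  move=> t; rewrite mem_cat !inE => /orP [h|/orP [/eqP ->|/orP [/eqP ->|h]]].
  - by apply: (@Inv_mono P) => [b|]; [left|apply: hI; rewrite El mem_cat h].
  - by apply: (@Inv_mono P) => [b|]; [left|apply: hI].
  - exists z, c; split => //; split; first by rewrite eq_sym.
    by split; [left; right|].
  - by apply: (@Inv_mono P) => [b|]; [left|apply: hI; rewrite El mem_cat inE h !orbT].
split.
  move=> t; rewrite El !mem_cat !inE => /orP [->//|/orP [->|->]]; by rewrite !orbT.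
split; first by exists (tperm z c) => //; rewrite mem_cat !inE eqxx !orbT.
have C1c : compose_fun l1 c = c.
  by apply: cf_fix => t ht; apply: fixc; rewrite El mem_cat ht.
have C1d : compose_fun l1 d = d.
  apply: cf_fix => t ht; apply/eqP; apply/negPn/negP => h.
  by move/negP: Hn; apply; apply/hasP; exists t.
rewrite El !cf_cat !cf_cons -!mulgA; congr (_ * _).
rewrite (@comm_tp _ _ _ _ C1c C1d) !mulgA; congr (_ * _).
by rewrite Ee id2.
Qed.

Lemma seed (m : nat) (c d : T) : m < n -> nat_of_ord c = m -> nat_of_ord d < m ->
  forall k, k <= m.+1 ->
  exists l : seq {perm T}, uniq l
    /\ (forall t, t \in l -> Inv (fun b => nat_of_ord b < k \/ b = c \/ b = d) t)
    /\ (forall b : T, nat_of_ord b < k \/ b = c \/ b = d -> exists2 t, t \in l & t b != b)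
    /\ tperm X Y \in l /\ compose_fun l = tperm c d.
Proof.
move=> mn hc hd; elim => [_|k IH hk].
  have cX : c != X by apply: small_X; lia.
  have cY : c != Y by apply: small_Y; lia.
  have dX : d != X by apply: small_X; lia.
  have dY : d != Y by apply: small_Y; lia.
  have cd : c != d by apply/eqP => E; move: hd; rewrite -E hc ltnn.
  have XYn := XY.
  have Xc : X != c by rewrite eq_sym.
  have Xd : X != d by rewrite eq_sym.
  have Yc : Y != c by rewrite eq_sym.
  have Yd : Y != d by rewrite eq_sym.
  have YX : Y != X by rewrite eq_sym.
  have dc : d != c by rewrite eq_sym.
  exists [:: tperm X c; tperm Y d; tperm X d; tperm Y c; tperm X Y].
  split.
    rewrite /= !inE !negb_or andbT; repeat (apply/andP; split);
      apply/negP => /eqP/permP E;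
      first [ solve [move/eqP: (E X); rewrite !permE /=; tpc]
               | solve [move/eqP: (E Y); rewrite !permE /=; tpc]
               | solve [move/eqP: (E c); rewrite !permE /=; tpc]
               | solve [move/eqP: (E d); rewrite !permE /=; tpc] ].
  split.
    move=> t; rewrite !inE => /orP [/eqP ->|/orP [/eqP ->|/orP [/eqP ->|/orP [/eqP ->|/eqP ->]]]].
    - by exists X, c; split; [left|split; [|split; [left; right; left|]]].
    - by exists Y, d; split; [right|split; [|split; [left; right; right|]]].
    - by exists X, d; split; [left|split; [|split; [left; right; right|]]].
    - by exists Y, c; split; [right|split; [|split; [left; right; left|]]].
    - by exists X, Y; split; [left|split; [|split; [right; right|]]].
  split.
    move=> b [//|[->|->]].
      by exists (tperm X c); rewrite ?inE ?eqxx // tpermR.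
    by exists (tperm Y d); rewrite ?inE ?eqxx ?orbT // tpermR.
  split; first by rewrite !inE eqxx !orbT.
  by rewrite /compose_fun /= !big_cons big_nil mulg1 !mulgA id3.
have [l [hu [hI [hT [hxy hC]]]]] := IH (ltnW hk).
pose a : T := inord k.
have ha : nat_of_ord a = k by rewrite /a inordK //; lia.
case: (boolP ((a == c) || (a == d))) => hacd.
  exists l; split => //; split.
    move=> t /hI; apply: Inv_mono => b [hb|hb]; last by right.
    by left; lia.
  split => //.
  move=> b [hb|hb]; last by apply: hT; right.
  case: (ltnP b k) => hbk; first by apply: hT; left.
  have -> : b = a by apply: val_inj => /=; rewrite ha; lia.
  by case/orP: hacd => /eqP ->; apply: hT; right; [left|right].
have nP : ~ (nat_of_ord a < k \/ a = c \/ a = d).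
  move=> [|[]]; [by rewrite ha ltnn| |] => E; by move: hacd; rewrite E eqxx ?orbT.
have [l' [hu' [hI' [hS [hT' hC']]]]] := @insert_fix _ a l nP (ltac:(lia)) hI hu hxy.
exists l'; split => //; split.
  move=> t /hI'; apply: Inv_mono => b [[hb|hb]|->]; [left; lia|by right|left; lia].
split.
  move=> b [hb|hb]; last by have [t ht ht2] := hT b (or_intror hb); exists t => //; apply: hS.
  case: (ltnP b k) => hbk.
    by have [t ht ht2] := hT b (or_introl hbk); exists t => //; apply: hS.
  by have -> : b = a by apply: val_inj => /=; rewrite ha; lia.
split; first by apply: hS.
by rewrite hC'.
Qed.

Lemma mainlem (m : nat) : m <= n -> forall tau : {perm T},
  tau X = X -> tau Y = Y -> (forall i : T, m <= i < n -> tau i = i) ->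
  tau = 1 \/ exists l : seq {perm T}, uniq l
    /\ (forall t, t \in l -> Inv (fun b => nat_of_ord b < m) t)
    /\ (forall b : T, nat_of_ord b < m -> exists2 t, t \in l & t b != b)
    /\ tperm X Y \in l /\ compose_fun l = tau.
Proof.
elim: m => [|m IH] hm tau hX hY hf.
  left; apply/permP => i; rewrite perm1.
  by case: (ord_cases i) => [hi|[->|->]] //; apply: hf; rewrite hi.
pose c : T := inord m.
have hc : nat_of_ord c = m by rewrite /c inordK //; lia.
have cX : c != X by apply: small_X; lia.
have cY : c != Y by apply: small_Y; lia.
case: (eqVneq (tau c) c) => htc.
  have hf' : forall i : T, m <= i < n -> tau i = i.
    move=> i /andP [h1 h2]; case: (eqVneq (nat_of_ord i) m) => e.
      by have -> : i = c by apply: val_inj => /=; rewrite hc.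
    by apply: hf; apply/andP; split => //; lia.
  case: (IH (ltnW hm) tau hX hY hf') => [->|[l [hu [hI [hT [hxy hC]]]]]]; first by left.
  right.
  have nP : ~ (nat_of_ord c < m) by rewrite hc ltnn.
  have [l' [hu' [hI' [hS [hT' hC']]]]] := @insert_fix _ c l nP (ltac:(lia)) hI hu hxy.
  exists l'; split => //; split.
    move=> t /hI'; apply: Inv_mono => b [hb|->]; [lia|by rewrite hc].
  split.
    move=> b hb; case: (eqVneq (nat_of_ord b) m) => e.
      by have -> : b = c by apply: val_inj => /=; rewrite hc.
    by have [t ht ht2] := hT b (ltac:(lia)); exists t => //; apply: hS.
  by split; [apply: hS|rewrite hC' hC].
set d := tau c.
have dX : d != X.
  apply/eqP => E; have /perm_inj E2 : tau c = tau X by rewrite hX.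
  by move: cX; rewrite E2 eqxx.
have dY : d != Y.
  apply/eqP => E; have /perm_inj E2 : tau c = tau Y by rewrite hY.
  by move: cY; rewrite E2 eqxx.
have hd : nat_of_ord d < m.
  case: (ord_cases d) => [hdn|[E|E]]; last by move: dY; rewrite E eqxx.
    case: (ltnP d m) => // hmd.
    case: (eqVneq (nat_of_ord d) m) => e.
      have E : c = d by apply: val_inj => /=; rewrite hc e.
      by move: htc; rewrite -/d -E eqxx.
    have td : tau d = d by apply: hf; apply/andP; split => //; lia.
    have /perm_inj E : tau d = tau c by rewrite td.
    by move: htc; rewrite -/d E eqxx.
  by move: dX; rewrite E eqxx.
have cd : c != d by apply/eqP => E; move: hd; rewrite -E hc ltnn.
pose tau' := tau * tperm c d.
have t'X : tau' X = X by rewrite /tau' permM hX tpermD // eq_sym.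
have t'Y : tau' Y = Y by rewrite /tau' permM hY tpermD // eq_sym.
have t'f : forall i : T, m <= i < n -> tau' i = i.
  move=> i /andP [h1 h2]; rewrite /tau' permM.
  case: (eqVneq (nat_of_ord i) m) => e.
    have -> : i = c by apply: val_inj => /=; rewrite hc.
    by rewrite -/d tpermR.
  have ti : tau i = i by apply: hf; apply/andP; split => //; lia.
  rewrite ti tpermD //.
    by apply/eqP => E; move: e; rewrite -E hc eqxx.
  by apply/eqP => E; move: E; rewrite /d -{1}ti => /perm_inj E; move: e; rewrite -E hc eqxx.
have Etau : tau = tau' * tperm c d by rewrite /tau' -mulgA tperm2 mulg1.
right.
case: (IH (ltnW hm) tau' t'X t'Y t'f) => [E1|[l [hu [hI [hT [hxy hC]]]]]].
  have [l [hu [hI [hT [hxy hC]]]]] := @seed m c d (ltac:(lia)) hc hd m.+1 (leqnn _).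
  exists l; split => //; split.
    move=> t /hI; apply: Inv_mono => b [hb|[->|->]]; [by []|by rewrite hc|lia].
  split; first by move=> b hb; apply: hT; left.
  by split => //; rewrite hC Etau E1 mul1g.
have hd' : has (fun t : {perm T} => t d != d) l.
  by have [t ht ht2] := hT d hd; apply/hasP; exists t.
have nP : ~ (nat_of_ord c < m) by rewrite hc ltnn.
have [l' [hu' [hI' [hS [hT' hC']]]]] := @insert_move _ c d l nP (ltac:(lia)) dX dY hI hu hd'.
exists l'; split => //; split.
  move=> t /hI'; apply: Inv_mono => b [hb|->]; [lia|by rewrite hc].
split.
  move=> b hb; case: (eqVneq (nat_of_ord b) m) => e.
    by have -> : b = c by apply: val_inj => /=; rewrite hc.
  by have [t ht ht2] := hT b (ltac:(lia)); exists t => //; apply: hS.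
by split; [apply: hS|rewrite hC' hC Etau].
Qed.

End Main.

Theorem theorem1p1 (n : nat) (hn : 2 <= n) (s : {perm 'I_n.+2})
    (hsx : s (ptx n) = ptx n) (hsy : s (pty n) = pty n) :
  exists l : seq {perm 'I_n.+2},
    [/\ uniq l,
        (forall t, t \in l ->
           is_transposition t /\ (t (ptx n) != ptx n \/ t (pty n) != pty n))
      & s^-1 = compose_fun l].
Proof.
have h1 : s^-1 (ptx n) = ptx n by rewrite -{1}hsx permK.
have h2 : s^-1 (pty n) = pty n by rewrite -{1}hsy permK.
have hv : forall i : 'I_n.+2, n <= i < n -> s^-1 i = i.
  by move=> i /andP [a b]; exfalso; lia.
case: (@mainlem n n (leqnn _) s^-1 h1 h2 hv) => [->|[l [hu [hI [_ [_ hC]]]]]].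
  by exists [::]; split => //; rewrite /compose_fun big_nil.
exists l; split => // t /hI [z [a [hz [ha [_ ->]]]]].
split; first by exists z, a; split => //; rewrite eq_sym.
by case: hz => E; subst z; [left|right]; rewrite tpermL.
Qed.
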